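(* Let $S$ be a finite set of points in $\mathbb{R}^D$, let $t\geqslant 1$ be a real number, let $G$ be a $t$-spanner for $S$, and let $T$ be a minimum spanning tree of $G$. Let $p$ and $q$ be two points of $S$. Then every edge on the path in $T$ between $p$ and $q$ has length at most $t\cdot d(p,q)$.
   Context: $d(u,v)$ denotes Euclidean distance. For a graph $G$ with vertex set $S\subset\mathbb{R}^D$, each edge $(u,v)$ has weight (length) $d(u,v)$ and $d_G(u,v)$ is the length of a shortest path in $G$ between $u$ and $v$. $G$ is a $t$-spanner for $S$ if its vertex set is $S$ and $d_G(u,v)\leqslant t\cdot d(u,v)$ for all $u,v\in S$. A minimum spanning tree of $G$ is a spanning tree of $G$ (using only edges of $G$) of minimum total edge weight. *)

(* Defs.v *)
From HB Require Import structures.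
From mathcomp Require Import all_boot all_order all_algebra.
From mathcomp Require Import reals.
Set Implicit Arguments. Unset Strict Implicit. Unset Printing Implicit Defensive.
Import Order.TTheory GRing.Theory Num.Theory.
Local Open Scope ring_scope.

Definition edist (R : realType) (D : nat) (x y : 'rV[R]_D) : R :=
  Num.sqrt (\sum_(i < D) (x ord0 i - y ord0 i) ^+ 2).

(* The point set S is the image of an injective map pos : V -> R^D, V a finType.
   Graphs on S are relations on V; edge (u,v) has weight edist (pos u) (pos v). *)

Definition walk_len (R : realType) (D : nat) (V : finType) (pos : V -> 'rV[R]_D)
    (u : V) (s : seq V) : R :=
  \sum_(e <- zip (u :: s) s) edist (pos e.1) (pos e.2).

Definition simple_graph (V : finType) (G : rel V) : Prop :=
  symmetric G /\ irreflexive G.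

(* G is a t-spanner: d_G(u,v) <= t * d(u,v), i.e. some walk in G from u to v
   has length at most t * d(u,v) (d_G is the minimum over such walks, which
   exists since simple paths are finitely many; d_G = +oo if none). *)
Definition t_spanner (R : realType) (D : nat) (V : finType) (pos : V -> 'rV[R]_D)
    (t : R) (G : rel V) : Prop :=
  forall u v : V, exists s : seq V,
    [/\ path G u s, last u s = v & walk_len pos u s <= t * edist (pos u) (pos v)].

(* total weight of a graph: each undirected edge counted once *)
Definition graph_weight (R : realType) (D : nat) (V : finType) (pos : V -> 'rV[R]_D)
    (H : rel V) : R :=
  (\sum_(u : V) \sum_(v : V | H u v) edist (pos u) (pos v)) / 2.

Definition acyclic (V : finType) (H : rel V) : Prop :=
  forall c : seq V, uniq c -> (3 <= size c)%N -> ~~ cycle H c.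

Definition spanning_tree_of (V : finType) (G H : rel V) : Prop :=
  [/\ symmetric H, subrel H G, (forall u v, connect H u v) & acyclic H].

Definition minimum_spanning_tree_of (R : realType) (D : nat) (V : finType)
    (pos : V -> 'rV[R]_D) (G H : rel V) : Prop :=
  spanning_tree_of G H /\
  forall H' : rel V, spanning_tree_of G H' -> graph_weight pos H <= graph_weight pos H'.

(* Main.v *)
Require Import Defs.
From HB Require Import structures.
From mathcomp Require Import all_boot all_order all_algebra.
From mathcomp Require Import reals.
Import Order.TTheory GRing.Theory Num.Theory.
Set Implicit Arguments. Unset Strict Implicit.
Local Open Scope ring_scope.

Definition eP (V : eqType) (x y : V) : rel V :=
  fun u v => ((u == x) && (v == y)) || ((u == y) && (v == x)).
Definition rem_e (V : eqType) (T : rel V) (x y : V) : rel V :=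
  fun u v => T u v && ~~ eP x y u v.
Definition add_e (V : eqType) (H : rel V) (a b : V) : rel V :=
  fun u v => H u v || eP a b u v.

Lemma eP_sym (V : eqType) (x y u v : V) : eP x y u v = eP x y v u.
Proof. by rewrite /eP; case: (u == x); case: (v == y); case: (u == y); case: (v == x). Qed.

Lemma zip_mem (V : eqType) (u x y : V) s :
  (x, y) \in zip (u :: s) s -> x \in u :: s /\ y \in s.
Proof.
elim: s u => [|z s IH] u //=; rewrite in_cons => /orP [/eqP|].
  by case=> -> ->; rewrite !in_cons !eqxx.
by move=> /IH [h1 h2]; rewrite h1 orbT in_cons h2 orbT.
Qed.

Lemma path_zip (V : eqType) (e : rel V) u s x y :
  path e u s -> (x, y) \in zip (u :: s) s -> e x y.
Proof.
elim: s u => [|z s IH] u //= /andP [euz ps]; rewrite in_cons => /orP [/eqP|h].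
  by case=> -> ->.
exact: IH h.
Qed.

Lemma close_connect (V : finType) (e : rel V) (P : pred V) u v :
  (forall z w, P z -> e z w -> P w) -> P u -> connect e u v -> P v.
Proof.
move=> cl Pu /connectP [s ps ->]; elim: s u Pu ps => [|z s IH] u Pu //= /andP [euz ps].
exact: IH (cl _ _ Pu euz) ps.
Qed.

Lemma edistC (R : realType) (D : nat) (x y : 'rV[R]_D) : edist x y = edist y x.
Proof. by rewrite /edist; congr Num.sqrt; apply: eq_bigr => i _; rewrite -sqrrN opprB. Qed.

Lemma edist_ge0 (R : realType) (D : nat) (x y : 'rV[R]_D) : 0 <= edist x y.
Proof. exact: sqrtr_ge0. Qed.

Lemma walk_len_ge0 (R : realType) (D : nat) (V : finType) (pos : V -> 'rV[R]_D) u s :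
  0 <= walk_len pos u s.
Proof. by rewrite /walk_len; apply: sumr_ge0 => e _; exact: edist_ge0. Qed.

Lemma walk_cross (R : realType) (D : nat) (V : finType) (pos : V -> 'rV[R]_D)
   (G : rel V) (C : pred V) u s :
  C u -> ~~ C (last u s) -> path G u s ->
  exists a b, [/\ G a b, C a, ~~ C b & edist (pos a) (pos b) <= walk_len pos u s].
Proof.
elim: s u => [|z s IH] u /=; first by move=> ->.
move=> Cu Cl /andP [Guz ps].
have -> : walk_len pos u (z :: s) = edist (pos u) (pos z) + walk_len pos z s.
  by rewrite /walk_len /= big_cons.
case Cz: (C z).
  have [a [b [h1 h2 h3 h4]]] := IH z Cz Cl ps.
  exists a, b; split=> //; rewrite -[X in X <= _]add0r; apply: lerD => //.
  exact: edist_ge0.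
exists u, z; split=> //; first by rewrite Cz.
by rewrite lerDl walk_len_ge0.
Qed.

Lemma sum_if_eq (R : realType) (V : finType) (b : V) (F : V -> R) :
  \sum_(v : V) (if v == b then F v else 0) = F b.
Proof. by rewrite -big_mkcond big_pred1_eq. Qed.

Lemma sum2_if_eq (R : realType) (V : finType) (a b : V) (F : V -> V -> R) :
  \sum_(u : V) \sum_(v : V) (if (u == a) && (v == b) then F u v else 0) = F a b.
Proof.
rewrite -[RHS](sum_if_eq a (fun u => F u b)); apply: eq_bigr => u _.
case: (u == a) => /=; first by rewrite sum_if_eq.
by rewrite big1.
Qed.

Lemma path_split (V : finType) (T : rel V) x y u s :
  path T u s -> uniq (u :: s) -> (x, y) \in zip (u :: s) s ->
  connect (rem_e T x y) u x /\ connect (rem_e T x y) y (last u s).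
Proof.
elim: s u => [|z s IH] u //= /andP [Tuz ps] /andP [uns us].
rewrite in_cons => /orP [/eqP|h].
  case=> -> ->; split; first by rewrite connect0.
  apply/connectP; exists s => //.
  apply: (@sub_in_path _ (predC1 u)) ps; last first.
    by apply/allP => v vi /=; apply: contraNneq uns => <-.
  move=> a b; rewrite !inE => au bu Tab.
  by rewrite /rem_e Tab /eP (negbTE au) (negbTE bu) !andbF.
have [c1 c2] := IH z ps us h; split => //.
have [hx hy] := zip_mem h.
have ux : (u == x) = false by apply/negbTE; apply: contraNneq uns => ->.
have uy : (u == y) = false.
  by apply/negbTE; apply: contraNneq uns => ->; rewrite in_cons hy orbT.
apply: connect_trans _ c1; apply: connect1.
by rewrite /rem_e Tuz /eP ux uy.
Qed.

Lemma no_T0_cycle (V : finType) (T : rel V) x y :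
  acyclic T -> T x y -> x != y -> connect (rem_e T x y) y x -> False.
Proof.
move=> Tacy Txy xny /connectP [s0 ps0 ex].
case: (shortenP ps0) ex => s' ps' us' _ ex.
have T0T : subrel (rem_e T x y) T by move=> u v /andP [].
case: s' ps' us' ex => [|z1 [|z2 r]] ps' us' ex.
- by move: xny; rewrite ex eqxx.
- by move: ps'; rewrite /= ex /rem_e /eP !eqxx orbT andbF.
- have := Tacy _ us'; rewrite /= => /(_ isT) /negP; apply.
  have := sub_path T0T ps'; rewrite /= rcons_path => /and3P [-> -> ->] /=.
  by rewrite ex /= in Txy.
Qed.

Lemma if_split (R : realType) (V : eqType) (H : rel V) a b (F : V -> V -> R) u v :
  a != b -> ~~ H a b -> ~~ H b a ->
  (if H u v || eP a b u v then F u v else 0) =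
  (if H u v then F u v else 0) + (if (u == a) && (v == b) then F u v else 0)
  + (if (u == b) && (v == a) then F u v else 0).
Proof.
move=> anb Hab Hba; rewrite /eP.
case Huv: (H u v); case e1: ((u == a) && (v == b));
  case e2: ((u == b) && (v == a)) => /=; rewrite ?addr0 ?add0r //.
all: try (move/andP: e1 => [/eqP e1 /eqP e1']; subst).
all: try (move/andP: e2 => [/eqP e2 /eqP e2']; subst).
all: try by rewrite eqxx in anb.
all: try by rewrite Huv in Hab.
all: by rewrite Huv in Hba.
Qed.

Lemma sum_split (R : realType) (V : finType) (H : rel V) a b (F : V -> V -> R) :
  a != b -> ~~ H a b -> ~~ H b a ->
  \sum_(u : V) \sum_(v : V) (if H u v || eP a b u v then F u v else 0) =
  \sum_(u : V) \sum_(v : V) (if H u v then F u v else 0) + F a b + F b a.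
Proof.
move=> anb Hab Hba.
rewrite -(sum2_if_eq a b F) -(sum2_if_eq b a F) -!big_split /=.
apply: eq_bigr => u _; rewrite -!big_split /=.
by apply: eq_bigr => v _; rewrite if_split.
Qed.

(* S = image of the injective pos; the path in T between p and q is the unique
   simple path p :: s in T ending at q; its edges are the consecutive pairs. *)
Theorem lemma4 (R : realType) (D : nat) (V : finType) (pos : V -> 'rV[R]_D)
    (t : R) (G T : rel V) (p q : V) :
  injective pos -> 1 <= t ->
  simple_graph G -> t_spanner pos t G ->
  minimum_spanning_tree_of pos G T ->
  forall s : seq V, path T p s -> last p s = q -> uniq (p :: s) ->
  forall x y : V, (x, y) \in zip (p :: s) s ->
    edist (pos x) (pos y) <= t * edist (pos p) (pos q).
Proof.
move=> _ _ [Gsym Girr] Gspan [[Tsym TG Tconn Tacy] Tmin] s ps lastq us x y xy_in.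
rewrite leNgt; apply/negP => Hlt.
have Txy : T x y := path_zip ps xy_in.
have xny : x != y by apply: contraTneq Txy => ->; apply/negP => /TG; rewrite Girr.
pose T0 := rem_e T x y.
have T0T : subrel T0 T by move=> u v /andP [].
have T0sym : symmetric T0 by move=> u v; rewrite /T0 /rem_e Tsym eP_sym.
have cT0sym := sym_connect_sym T0sym.
have [cpx cyq] := path_split ps us xy_in; rewrite lastq in cyq.
pose C := connect T0 p.
have Cq : ~~ C q.
  apply/negP => cpq; apply: (no_T0_cycle Tacy Txy xny).
  apply: connect_trans cyq (connect_trans _ cpx); by rewrite cT0sym.
have [w [pw lw lenw]] := Gspan p q.
have Cl : ~~ C (last p w) by rewrite lw.
have [a [b [Gab Ca Cb dab]]] := walk_cross pos (C := C) (connect0 _ _) Cl pw.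
have dlt : edist (pos a) (pos b) < edist (pos x) (pos y).
  exact: le_lt_trans dab (le_lt_trans lenw Hlt).
pose T' := add_e T0 a b.
have anb : a != b by apply: contraNneq Cb => <-.
have T0ab : ~~ T0 a b by apply: contra Cb => h; exact: connect_trans Ca (connect1 h).
have T0ba : ~~ T0 b a by rewrite T0sym.
have T'sym : symmetric T' by move=> u v; rewrite /T' /add_e T0sym eP_sym.
have T0T' : subrel T0 T' by move=> u v h; rewrite /T' /add_e h.
have subc : forall u v, connect T0 u v -> connect T' u v.
  by move=> u v; apply: connect_sub => u' v' h; apply: connect1; exact: T0T'.
have side : forall u, connect T0 x u || connect T0 y u.
  move=> u; apply: (@close_connect _ T (fun w => connect T0 x w || connect T0 y w) x u) (Tconn x u); last by rewrite connect0.
  move=> z w' hz Tzw; case E: (eP x y z w').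
    by case/orP: E => /andP [_ /eqP ->]; rewrite connect0 ?orbT.
  have e0 : T0 z w' by rewrite /T0 /rem_e Tzw E.
  by case/orP: hz => h; rewrite (connect_trans h (connect1 e0)) ?orbT.
have Tsp : spanning_tree_of G T'.
  split => //.
  - move=> u v /orP [/T0T/TG //|/orP [/andP [/eqP -> /eqP ->] //|/andP [/eqP -> /eqP ->]]].
    by rewrite Gsym.
  - have pT'u : forall u, connect T' p u.
      move=> u; case/orP: (side u) => h.
        by apply: subc; exact: connect_trans cpx h.
      have cyb : connect T0 y b.
        case/orP: (side b) => // hb; case/negP: Cb; exact: connect_trans cpx hb.
      apply: connect_trans (subc _ _ Ca) _.
      have T'ab : T' a b by rewrite /T' /add_e /eP !eqxx orbT.
      apply: connect_trans (connect1 T'ab) _.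
      by apply: subc; apply: connect_trans _ h; rewrite cT0sym.
    move=> u v; apply: connect_trans (pT'u v); rewrite (sym_connect_sym T'sym); exact: pT'u.
  - move=> c uc sc; apply/negP => cyc.
    have T'T0 : {in predC1 b &, subrel T' T0}.
      move=> u v ub vb /orP [//|/orP [/andP [_ /eqP vb']|/andP [/eqP ub' _]]].
        by move: vb; rewrite vb' inE eqxx.
      by move: ub; rewrite ub' inE eqxx.
    case bc: (b \in c); last first.
      have c0 : cycle T0 c.
        apply: (sub_in_cycle T'T0) cyc.
        by apply/allP => v vi /=; apply: contraNneq (negbT bc) => <-.
      by have := Tacy c uc sc; rewrite (sub_cycle T0T c0).
    case: (rot_to bc) => i r er.
    move: cyc uc sc (Tacy c uc sc).
    rewrite -(rot_cycle i) -(rot_uniq i) -(size_rot i) -(rot_cycle i T) er.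
    case: r er => [|z1 r1] er //.
    rewrite /= !rcons_path => /and3P [h1 h2 h3] /andP [bn /andP [z1n ur1]] sz /negP nc.
    have r1n : r1 != [::] by case: r1 sz {er h2 h3 z1n ur1 bn nc}.
    have wr1 : last z1 r1 \in r1.
      by case: r1 r1n {er h2 h3 z1n ur1 bn nc sz} => // z r1' _ /=; exact: mem_last.
    have p0 : path T0 z1 r1.
      apply: (sub_in_path T'T0) h2.
      by apply/allP => v vi /=; apply: contraNneq bn => <-.
    have side1 : T0 b z1 \/ z1 = a.
      case/orP: h1 => [h|/orP [/andP [/eqP ba _]|/andP [_ /eqP ->]]]; [by left | | by right].
      by rewrite ba eqxx in anb.
    have side2 : T0 (last z1 r1) b \/ last z1 r1 = a.
      case/orP: h3 => [h|/orP [/andP [/eqP -> _]|/andP [_ /eqP ba]]]; [by left | by right |].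
      by rewrite ba eqxx in anb.
    case: side1 => [e1|e1]; case: side2 => [e2|e2].
    + by apply: nc; rewrite (T0T _ _ e1) (sub_path T0T p0) (T0T _ _ e2).
    + case/negP: Cb; apply: connect_trans Ca _; rewrite cT0sym.
      apply/connectP; exists (z1 :: r1); first by rewrite /= e1 p0.
      by rewrite /= e2.
    + case/negP: Cb; apply: connect_trans Ca _.
      apply/connectP; exists (rcons r1 b); first by rewrite -e1 rcons_path p0 e2.
      by rewrite last_rcons.
    + by move: z1n; rewrite e1 -e2 wr1.
pose F := fun u v => edist (pos u) (pos v).
have E : forall H : rel V, graph_weight pos H =
    (\sum_(u : V) \sum_(v : V) (if H u v then F u v else 0)) / 2.
  by move=> H; rewrite /graph_weight; congr (_ / _); apply: eq_bigr => u _; rewrite big_mkcond.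
have ET : forall u v, T u v = T0 u v || eP x y u v.
  move=> u v; rewrite /T0 /rem_e; case E1: (eP x y u v); rewrite ?orbT ?andbT ?orbF //.
  by case/orP: E1 => /andP [/eqP -> /eqP ->] //; rewrite Tsym.
have T0xy : ~~ T0 x y by rewrite /T0 /rem_e /eP !eqxx andbF.
have T0yx : ~~ T0 y x by rewrite /T0 /rem_e /eP !eqxx orbT andbF.
have := Tmin T' Tsp; rewrite leNgt => /negP; apply.
rewrite !E ltr_pM2r ?invr_gt0 ?ltr0n //.
have -> : \sum_(u : V) \sum_(v : V) (if T u v then F u v else 0) =
    \sum_(u : V) \sum_(v : V) (if T0 u v || eP x y u v then F u v else 0).
  by apply: eq_bigr => u _; apply: eq_bigr => v _; rewrite ET.
rewrite /T' /add_e !sum_split // /F (edistC (pos b)) (edistC (pos y)).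
by rewrite -!addrA ltrD2l; apply: ltrD.
Qed.
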